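(* Let $\mathcal{I}$ be an ideal. (a) $\mathrm{Fin}^2\sqsubseteq\mathcal{I}$ if and only if $\mathrm{FinBW}(\mathcal{I})$ consists exactly of the finite (Hausdorff) spaces. (b) $\mathcal{I}$ is boring and $\mathrm{Fin}^2\not\sqsubseteq\mathcal{I}$ if and only if $\mathrm{FinBW}(\mathcal{I})$ consists exactly of the (Hausdorff) boring spaces. (c) $\mathcal{I}$ is not tall if and only if $\mathrm{FinBW}(\mathcal{I})$ consists exactly of the (Hausdorff) sequentially compact spaces.
   Context: An ideal on an infinite countable set $X$ is a family $\mathcal{I}\subseteq\mathcal{P}(X)$ closed under subsets and finite unions, containing all finite subsets, with $X\notin\mathcal{I}$. $\mathcal{I}$ is tall if every infinite $A\subseteq X$ has an infinite subset in $\mathcal{I}$. A space $X$ is in $\mathrm{FinBW}(\mathcal{I})$ if $X$ is Hausdorff and for every sequence $(x_n)_{n\in\bigcup\mathcal{I}}$ in $X$ there is $A\notin\mathcal{I}$ with $(x_n)_{n\in A}$ convergent in $X$. $\mathrm{Fin}^2$: ideal on $\omega^2$ of all $A$ with only finitely many $n$ such that $\{m:(n,m)\in A\}$ is infinite. $\mathcal{BI}$: ideal on $\omega^3$ of all $A$ for which there is $k$ with $\{(j,l):(i,j,l)\in A\}\in\mathrm{Fin}^2$ for $i<k$ and finite for $i\ge k$. $\mathcal{I}\sqsubseteq\mathcal{J}$: there is a bijection $f:\bigcup\mathcal{J}\to\bigcup\mathcal{I}$ with $f^{-1}[A]\in\mathcal{J}$ for all $A\in\mathcal{I}$. An ideal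 $\mathcal{I}$ is boring if $\mathcal{BI}\sqsubseteq\mathcal{I}$. A topological space $X$ is boring if it is sequentially compact and there is a finite $F\subseteq X$ such that every convergent sequence in $X$ with infinitely many distinct values converges to some point of $F$. *)

(* Defs.v *)
From HB Require Import structures.
From mathcomp Require Import all_boot all_order.
From mathcomp Require Import boolp classical_sets functions cardinality topology.
Set Implicit Arguments.
Unset Strict Implicit.
Unset Printing Implicit Defensive.
Local Open Scope classical_set_scope.

Definition is_ideal (X : Type) (I : set (set X)) : Prop :=
  (forall A B, I B -> A `<=` B -> I A) /\
  (forall A B, I A -> I B -> I (A `|` B)) /\
  (forall A, finite_set A -> I A) /\
  ~ I [set: X].

Definition tall (X : Type) (I : set (set X)) : Prop :=
  forall A : set X, infinite_set A ->
    exists B, B `<=` A /\ infinite_set B /\ I B.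

Definition Fin2 : set (set (nat * nat)) :=
  fun A => finite_set [set n | infinite_set [set m | A (n, m)]].

Definition BI : set (set (nat * (nat * nat))) :=
  fun A => exists k : nat,
    (forall i, (i < k)%N -> Fin2 [set jl | A (i, jl)]) /\
    (forall i, (k <= i)%N -> finite_set [set jl | A (i, jl)]).

(* I ⊑ J : a bijection f : ⋃J -> ⋃I with f^{-1}[A] ∈ J for A ∈ I.
   (For ideals, ⋃I is the whole carrier since singletons belong to I.) *)
Definition ideal_le (X Y : Type) (I : set (set X)) (J : set (set Y)) : Prop :=
  exists f : Y -> X, bijective f /\ forall A, I A -> J (f @^-1` A).

Definition boring_ideal (X : Type) (I : set (set X)) : Prop := ideal_le BI I.

Definition conv_along (X : Type) (T : topologicalType) (x : X -> T)
    (A : set X) (y : T) : Prop :=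
  forall U, nbhs y U -> finite_set [set n | A n /\ ~ U (x n)].

Definition FinBW (X : Type) (I : set (set X)) (T : topologicalType) : Prop :=
  hausdorff_space T /\
  forall x : X -> T, exists A : set X, ~ I A /\ exists y : T, conv_along x A y.

Definition seq_compact (T : topologicalType) : Prop :=
  forall s : nat -> T, exists phi : nat -> nat,
    {homo phi : m n / (m < n)%N} /\ exists y : T, (s \o phi) @ \oo --> y.

Definition boring_space (T : topologicalType) : Prop :=
  seq_compact T /\
  exists F : set T, finite_set F /\
    forall s : nat -> T, infinite_set (range s) ->
      (exists y : T, s @ \oo --> y) -> exists y, F y /\ s @ \oo --> y.

(* Main.v *)
Require Import Defs.
From HB Require Import structures.
From mathcomp Require Import all_boot all_order.
From mathcomp Require Import boolp classical_sets functions cardinality topology.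
Set Implicit Arguments.
Unset Strict Implicit.
Unset Printing Implicit Defensive.
Local Open Scope classical_set_scope.


Lemma fin_nat_bound (A : set nat) : finite_set A -> exists N, forall n, A n -> (n < N)%N.
Proof.
move=> /finite_seqP[s ->]; exists (\max_(i <- s) i).+1 => n /= ns.
by rewrite ltnS; apply: leq_bigmax_seq.
Qed.
Lemma bound_fin (A : set nat) N : (forall n, A n -> (n < N)%N) -> finite_set A.
Proof. move=> h; apply: (sub_finite_set _ (finite_II N)) => n /h. by []. Qed.

Lemma inf_seq (T : Type) (A : set T) : infinite_set A ->
  exists e : nat -> T, (forall n, A (e n)) /\ injective e.
Proof.
elim/Ppointed: T A => T A.
  by move=> Ainf; exfalso; apply: Ainf; rewrite (empty_eq0 A); exact: finite_set0.
move=> /infiniteP /pcard_leP [f].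
exists f; split; first by move=> n; apply: (@funS _ _ _ _ f).
exact: injT.
Qed.

Lemma enum_cinf (T : Type) (A : set T) : countable A -> infinite_set A ->
  exists e : nat -> T, (forall n, A (e n)) /\ injective e /\
    (forall x, A x -> exists n, e n = x).
Proof.
move=> cA iA; have /card_set_bijP[f [fF fI fS]] := eq_card_nat cA iA.
have /choice[e he] : forall n, exists x, A x /\ f x = n.
  by move=> n; have [x Ax fx] := fS n I; exists x.
exists e; split; first by move=> n; case: (he n).
split; first by move=> m n emn; rewrite -(he m).2 -(he n).2 emn.
move=> x Ax; exists (f x); apply: fI; rewrite ?in_setE //; first by case: (he (f x)).
by rewrite (he (f x)).2.
Qed.

Section Ideal.
Context (X : Type) (I : set (set X)) (hI : is_ideal I).

Lemma idS A B : I B -> A `<=` B -> I A.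
Proof. by case: hI => h _ ?; exact: h. Qed.
Lemma idU A B : I A -> I B -> I (A `|` B).
Proof. by case: hI => _ [h _] ?; exact: h. Qed.
Lemma idF A : finite_set A -> I A.
Proof. by case: hI => _ [_ [h _]]; exact: h. Qed.
Lemma idT : ~ I [set: X].
Proof. by case: hI => _ [_ [_ h]]. Qed.
Lemma id0 : I set0.
Proof. exact/idF/finite_set0. Qed.

Lemma id_bigcup (K : Type) (D : set K) (F : K -> set X) :
  finite_set D -> (forall k, D k -> I (F k)) -> I (\bigcup_(k in D) F k).
Proof.
elim/Peq: K D F => K D F /finite_seqP[s ->].
elim: s => [|a s IH] h.
  by apply: (idS id0) => x [k].
apply: (idS (idU (h a _) (IH _))).
- by rewrite /= inE eqxx.
- by move=> k ks; apply: h; rewrite /= inE ks orbT.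
move=> x [k /=]; rewrite inE => /orP[/eqP -> |ks] Fx; first by left.
by right; exists k.
Qed.

End Ideal.

Section Conv.
Context (X : Type) (T : topologicalType).
Implicit Types (x : X -> T) (A B : set X).

Lemma conv_sub x A B y : B `<=` A -> conv_along x A y -> conv_along x B y.
Proof.
move=> BA h U hU; apply: sub_finite_set (h U hU) => n [Bn Un]; split=> //.
exact: BA.
Qed.

Lemma conv_fin x A y : finite_set A -> conv_along x A y.
Proof. by move=> fA U _; apply: sub_finite_set fA => n []. Qed.

Lemma conv_U x A B y : conv_along x A y -> conv_along x B y ->
  conv_along x (A `|` B) y.
Proof.
move=> hA hB U hU; have := finite_setU [set n | A n /\ ~ U (x n)] [set n | B n /\ ~ U (x n)].
rewrite /=; move=> e; have : finite_set ([set n | A n /\ ~ U (x n)] `|` [set n | B n /\ ~ U (x n)]).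
  by rewrite e; split; [apply: hA|apply: hB].
by apply: sub_finite_set => n [[An|Bn] nU]; [left|right].
Qed.

Lemma conv_const x A p : (forall n, A n -> x n = p) -> conv_along x A p.
Proof.
move=> h U hU; apply: sub_finite_set (finite_set0 X) => n [An]; rewrite h //.
by move/(_ (nbhs_singleton hU)).
Qed.

Lemma nbhs_all_eq (hT : hausdorff_space T) (p y : T) :
  (forall U, nbhs y U -> U p) -> p = y.
Proof.
move=> h; apply: hT => A B pA yB; exists p; split; last exact: h.
exact: nbhs_singleton.
Qed.

Lemma conv_uniq (hT : hausdorff_space T) x A y z : infinite_set A ->
  conv_along x A y -> conv_along x A z -> y = z.
Proof.
move=> iA hy hz; apply: hT => U V yU zV.
have fin := finite_setU [set n | A n /\ ~ U (x n)] [set n | A n /\ ~ V (x n)].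
have : finite_set ([set n | A n /\ ~ U (x n)] `|` [set n | A n /\ ~ V (x n)]).
  by rewrite fin; split; [apply: hy|apply: hz].
move=> hf; apply: contrapT => hne.
apply: iA; apply: sub_finite_set hf => n An.
have [Un|nUn] := pselect (U (x n)); last by left.
have [Vn|nVn] := pselect (V (x n)); last by right.
by exfalso; apply: hne; exists (x n).
Qed.

Lemma conv_const_inf (hT : hausdorff_space T) x A A' p y :
  A' `<=` A -> infinite_set A' -> (forall n, A' n -> x n = p) ->
  conv_along x A y -> p = y.
Proof.
move=> AA iA' hp hy; apply: (conv_uniq hT iA' (conv_const hp)).
exact: conv_sub hy.
Qed.

End Conv.

Lemma fin_inj (T U : Type) (S : set T) (F : set U) (g : T -> U) :
  {in S &, injective g} -> finite_set F -> finite_set (S `&` g @^-1` F).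
Proof.
move=> gi fF.
have gi' : {in S `&` g @^-1` F &, injective g}.
  by move=> a b; rewrite !in_setE => -[Sa _] [Sb _]; apply: gi; rewrite in_setE.
rewrite -(eq_finite_set (inj_card_eq gi')).
by apply: sub_finite_set fF => _ [x [_ Fx] <-].
Qed.

Lemma col_fin (A : set (nat * nat)) j : finite_set [set m | A (j, m)] ->
  finite_set [set p | p.1 = j /\ A p].
Proof.
move=> h; apply: sub_finite_set (finite_image (pair j) h) => -[a b] /= [-> Ab].
by exists b.
Qed.

Section Pullback.
Context (X : Type) (I : set (set X)) (hI : is_ideal I).

Lemma fin2_core (S : set X) (g : X -> nat * nat) : {in S &, injective g} ->
  (forall j, I (S `&` [set x | (g x).1 = j])) ->
  (forall B, B `<=` S -> (forall j, finite_set (B `&` [set x | (g x).1 = j])) -> I B) ->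
  forall A, Fin2 A -> I (S `&` g @^-1` A).
Proof.
move=> gi hcol hB A hA.
pose N := [set n | infinite_set [set m | A (n, m)]].
pose B := [set x | (S `&` g @^-1` A) x /\ ~ N (g x).1].
have hBB : I B.
  apply: hB; first by move=> x [[]].
  move=> j; have [Nj|nNj] := pselect (N j).
    by apply: sub_finite_set (finite_set0 X) => x [[_ nN] /= e]; apply: nN; rewrite e.
  have fj : finite_set [set m | A (j, m)] by apply: contrapT.
  apply: sub_finite_set (fin_inj gi (col_fin fj)) => x [[[Sx Ax] _] /= e].
  by split => //.
apply: (idS hI (idU hI (id_bigcup hI hA (fun j _ => hcol j)) hBB)).
move=> x [Sx Ax]; have [Nx|nNx] := pselect (N (g x).1).
  by left; exists (g x).1.
by right.
Qed.

Lemma fin2_from_cols (f : X -> nat * nat) : bijective f ->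
  (forall j, I [set x | (f x).1 = j]) ->
  (forall B, (forall j, finite_set (B `&` [set x | (f x).1 = j])) -> I B) ->
  ideal_le Fin2 I.
Proof.
move=> fb hc hB; exists f; split => // A hA.
have fi : {in [set: X] &, injective f} by move=> a b _ _; apply: bij_inj.
have := fin2_core fi _ _ hA; rewrite setTI; apply.
  by move=> j; rewrite setTI.
by move=> B _; apply: hB.
Qed.

Lemma BI_from_cols (f : X -> nat * (nat * nat)) : bijective f ->
  (forall i j, I [set x | (f x).1 = i /\ (f x).2.1 = j]) ->
  (forall i B, B `<=` [set x | (f x).1 = i] ->
     (forall j, finite_set (B `&` [set x | (f x).2.1 = j])) -> I B) ->
  (forall B, (forall i, finite_set (B `&` [set x | (f x).1 = i])) -> I B) ->
  ideal_le BI I.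
Proof.
move=> fb hc hsec hB; exists f; split => // A [k [hlt hge]].
have fi : injective f by apply: bij_inj.
pose S i := [set x : X | (f x).1 = i].
have hi : forall i, (i < k)%N -> I (S i `&` (snd \o f) @^-1` [set jl | A (i, jl)]).
  move=> i ik; apply: fin2_core (hlt i ik).
  - move=> a b; rewrite !in_setE /S /= => ea eb e2; apply: fi.
    by move: ea eb e2; case: (f a) => ? ?; case: (f b) => ? ? /= -> -> ->.
  - move=> j; apply: (idS hI (hc i j)) => x [/= ? ?]; split => //.
  - by move=> B BS hj; apply: (hsec i B BS) => j; apply: hj.
pose Bt := [set x | A (f x) /\ (k <= (f x).1)%N].
have hBt : I Bt.
  apply: hB => i; have [ik|ki] := ltnP i k.
    by apply: sub_finite_set (finite_set0 X) => x [[_ kx] /= e]; move: kx; rewrite e leqNgt ik.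
  have fAi := hge i ki.
  have fi' : {in [set: X] &, injective f} by move=> a b _ _; apply: fi.
  have := fin_inj fi' (finite_image (pair i) fAi).
  apply: sub_finite_set => x [[Ax _] /= e]; split => //=.
  by exists (f x).2 => //=; case: (f x) e Ax => ? ? /= -> .
pose D := [set i | (i < k)%N].
have := idU hI (id_bigcup hI (finite_II k) hi) hBt.
move=> hh; apply: (idS hI hh) => x /= Ax; have [xk|kx] := ltnP (f x).1 k.
  left; exists (f x).1 => //; split => //=.
  by case: (f x) Ax => ? ? /=.
by right.
Qed.

End Pullback.

Lemma combine_cols (X K : Type) (Q : K -> set X) : countable [set: X] ->
  (forall k, infinite_set (Q k)) -> (forall x, exists k, Q k x) ->
  (forall k k' x, Q k x -> Q k' x -> k = k') ->
  exists f : X -> K * nat, bijective f /\ (forall x, Q (f x).1 x).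
Proof.
move=> cX iQ cov dis.
have /choice[e he] : forall k, exists e : nat -> X, (forall n, Q k (e n)) /\ injective e /\
    (forall x, Q k x -> exists n, e n = x).
  move=> k; apply: enum_cinf (iQ k).
  exact: sub_countable (subset_card_le (subsetT (Q k))) cX.
have /choice[f hf] : forall x, exists p : K * nat, Q p.1 x /\ e p.1 p.2 = x.
  move=> x; have [k Qkx] := cov x; have [n en] := (he k).2.2 x Qkx.
  by exists (k, n).
exists f; split; last by move=> x; case: (hf x).
exists (fun p => e p.1 p.2); first by move=> x; case: (hf x).
move=> [k n]; case: (hf (e k n)) => Q1 e1.
have k1 : (f (e k n)).1 = k by apply: dis Q1 ((he k).1 n).
move: e1; case: (f (e k n)) k1 => k' n' /= -> e1.
by rewrite ((he k).2.1 _ _ e1).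
Qed.

Lemma idx_count (X K : Type) (P : K -> set X) : countable [set: X] ->
  (forall k k' x, P k x -> P k' x -> k = k') ->
  countable [set k | P k !=set0].
Proof.
move=> /countable_injP[h hi] dis; apply/countable_injP.
have /choice[r hr] : forall k, exists n : nat, P k !=set0 -> exists2 x, P k x & h x = n.
  move=> k; have [[x Px]|nP] := pselect (P k !=set0); last by exists 0%N.
  by exists (h x) => _; exists x.
exists r => k k'; rewrite !in_setE => /[dup] nk /(hr k)[x Px hx] /[dup] nk' /(hr k')[x' Px' hx'] e.
have xx : x = x' by apply: hi; rewrite ?in_setE // hx hx' e.
by apply: (dis _ _ x) => //; rewrite xx.
Qed.

Section LemmaL.
Context (X : Type) (I : set (set X)) (hI : is_ideal I) (hXc : countable [set: X]).

Lemma lemmaL (K : Type) (P : K -> set X) :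
  (forall x, exists k, P k x) -> (forall k k' x, P k x -> P k' x -> k = k') ->
  (forall k, I (P k)) -> (forall B, (forall k, finite_set (B `&` P k)) -> I B) ->
  ideal_le Fin2 I.
Proof.
move=> cov dis hP hB.
pose S := [set k | infinite_set (P k)].
pose J := [set x | forall k, P k x -> ~ S k].
have hJ : I J.
  apply: hB => k; have [Sk|nSk] := pselect (S k).
    by apply: sub_finite_set (finite_set0 X) => x [Jx Px]; apply: (Jx k).
  by apply: sub_finite_set (contrapT nSk) => x [].
have iS : infinite_set S.
  move=> fS; apply: (idT hI); apply: (idS hI (idU hI (id_bigcup hI fS (fun k _ => hP k)) hJ)).
  move=> x _; have [[k [Sk Pk]]|nk] := pselect (exists k, S k /\ P k x).
    by left; exists k.
  by right => k Pk Sk; apply: nk; exists k.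
have cS : countable S.
  apply: sub_countable (subset_card_le _) (idx_count hXc dis) => k Sk.
  exact: infinite_setN0.
have [e [eS [ei esurj]]] := enum_cinf cS iS.
pose Q j := [set x | P (e j) x \/ (j = 0%N /\ J x)].
have [f [fb fQ]] : exists f : X -> nat * nat, bijective f /\ (forall x, Q (f x).1 x).
  apply: combine_cols => //.
  - move=> j; apply: sub_infinite_set (eS j) => x Px; by left.
  - move=> x; have [k Pk] := cov x; have [Sk|nSk] := pselect (S k).
      by have [n en] := esurj k Sk; exists n; left; rewrite en.
    exists 0%N; right; split => // k' Pk'; by rewrite (dis _ _ _ Pk' Pk).
  - move=> j j' x [Pj|[j0 Jx]] [Pj'|[j0' Jx']].
    + by apply: ei; apply: dis Pj Pj'.
    + by exfalso; apply: (Jx' _ Pj); apply: eS.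
    + by exfalso; apply: (Jx _ Pj'); apply: eS.
    + by rewrite j0 j0'.
have Qdis : forall j j' x, Q j x -> Q j' x -> j = j'.
  move=> j j' x [Pj|[j0 Jx]] [Pj'|[j0' Jx']].
  + by apply: ei; apply: dis Pj Pj'.
  + by exfalso; apply: (Jx' _ Pj); apply: eS.
  + by exfalso; apply: (Jx _ Pj'); apply: eS.
  + by rewrite j0 j0'.
have colE : forall j, [set x | (f x).1 = j] = Q j.
  move=> j; apply/seteqP; split => x /=; first by move=> <-; apply: fQ.
  by move=> Qx; apply: Qdis (fQ x) Qx.
apply: (fin2_from_cols hI fb).
  move=> j; rewrite colE; apply: (idS hI (idU hI (hP (e j)) hJ)).
  by move=> x [Px|[_ Jx]]; [left|right].
move=> B hBc; apply: hB => k; have [Sk|nSk] := pselect (S k).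
  have [n en] := esurj k Sk; apply: sub_finite_set (hBc n) => x [Bx Px].
  by split => //; rewrite colE; left; rewrite en.
by apply: sub_finite_set (contrapT nSk) => x [].
Qed.

End LemmaL.

Section LemmaM.
Context (X : Type) (I : set (set X)) (hI : is_ideal I) (hXc : countable [set: X]).
Context (K : Type) (P : K -> set X) (b : K -> nat).
Hypothesis cov : forall x, exists k, P k x.
Hypothesis dis : forall k k' x, P k x -> P k' x -> k = k'.
Hypothesis hP : forall k, I (P k).
Local Notation blk i := [set x | exists2 k, b k = i & P k x].
Hypothesis hsec : forall i B, B `<=` blk i ->
  (forall k, finite_set (B `&` P k)) -> I B.
Hypothesis htail : forall B, (forall i, finite_set (B `&` blk i)) -> I B.
Hypothesis nF2 : ~ ideal_le Fin2 I.

Local Notation G := [set i | infinite_set [set k | b k = i /\ infinite_set (P k)]].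
Local Notation Jb i := [set x | blk i x /\ forall k, P k x -> finite_set (P k)].

Let blk_dis i i' x : blk i x -> blk i' x -> i = i'.
Proof. by move=> [k <- Pk] [k' <- Pk']; rewrite (dis Pk Pk'). Qed.

Let hJb i : I (Jb i).
Proof.
apply: (hsec (i := i)); first by move=> x [].
move=> k; have [fk|ik] := pselect (finite_set (P k)).
  by apply: sub_finite_set fk => x [].
by apply: sub_finite_set (finite_set0 X) => x [[_ h] Pk]; apply: ik; apply: h.
Qed.

Let bad_blk i : ~ G i -> I (blk i).
Proof.
move=> nG; have fG : finite_set [set k | b k = i /\ infinite_set (P k)] by apply: contrapT.
apply: (idS hI (idU hI (id_bigcup hI fG (fun k _ => hP k)) (hJb i))).
move=> x bx; have [[k [bk Pk ik]]|nk] := pselect (exists k, [/\ b k = i, P k x & infinite_set (P k)]).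
  by left; exists k.
right; split => // k Pk; apply: contrapT => ik; apply: nk; exists k; split => //.
by case: bx => k' <- Pk'; rewrite (dis Pk Pk').
Qed.

Let caseG : ~ finite_set G.
Proof.
move=> fG; apply: nF2.
pose P' (z : K + nat) := match z with
  | inl k => [set x | G (b k) /\ P k x]
  | inr i => [set x | ~ G i /\ blk i x] end.
apply: (lemmaL hI hXc (P := P')).
- move=> x; have [k Pk] := cov x; have [Gk|nGk] := pselect (G (b k)).
    by exists (inl k).
  by exists (inr (b k)); split => //; exists k.
- move=> [k|i] [k'|i'] x /=.
  + by move=> [_ Pk] [_ Pk']; rewrite (dis Pk Pk').
  + by move=> [Gk Pk] [nG [k2 bk Pk']]; exfalso; apply: nG; rewrite -bk -(dis Pk Pk').
  + by move=> [nG [k2 bk Pk']] [Gk Pk]; exfalso; apply: nG; rewrite -bk -(dis Pk Pk').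
  + by move=> [_ b1] [_ b2]; rewrite (blk_dis b1 b2).
- move=> [k|i] /=; first by apply: (idS hI (hP k)) => x [].
  have [Gi|nGi] := pselect (G i).
    by apply: (idS hI (id0 hI)) => x [].
  by apply: (idS hI (bad_blk nGi)) => x [].
move=> B hB.
have h1 : forall i, G i -> I (B `&` blk i).
  move=> i Gi; apply: (hsec (i := i)); first by move=> x [].
  move=> k; have [bk|bk] := eqVneq (b k) i.
    apply: sub_finite_set (hB (inl k)) => x [[Bx _] Pk]; split => //=.
    by rewrite bk.
  by apply: sub_finite_set (finite_set0 X) => x [[_ [k' bk' Pk']] Pk]; move/eqP: bk; apply; rewrite (dis Pk Pk').
pose B2 := [set x | B x /\ exists2 i, ~ G i & blk i x].
have h2 : I B2.
  apply: htail => i; have [Gi|nGi] := pselect (G i).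
    by apply: sub_finite_set (finite_set0 X) => x [[_ [i' nG bi']] bi]; apply: nG; rewrite (blk_dis bi' bi).
  apply: sub_finite_set (hB (inr i)) => x [[Bx _] bi]; by split.
apply: (idS hI (idU hI (id_bigcup hI fG h1) h2)) => x Bx.
have [k Pk] := cov x; have [Gk|nGk] := pselect (G (b k)).
  by left; exists (b k) => //; split => //; exists k.
by right; split => //; exists (b k) => //; exists k.
Qed.

Lemma lemmaM : ideal_le BI I.
Proof.
have iG : infinite_set G := caseG.
have cG : countable G by apply: countableP.
have [g [gG [gi gsurj]]] := enum_cinf cG iG.
have /choice[e he] : forall s, exists e : nat -> K,
    (forall n, (b (e n) = g s /\ infinite_set (P (e n)))) /\ injective e /\
    (forall k, b k = g s /\ infinite_set (P k) -> exists n, e n = k).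
  move=> s; apply: enum_cinf (gG s).
  apply: sub_countable (subset_card_le _) (idx_count hXc dis) => k [_ ik].
  exact: infinite_setN0.
pose Q (p : nat * nat) := [set x | P (e p.1 p.2) x \/
   (p.2 = 0%N /\ (Jb (g p.1) x \/ (~ G p.1 /\ blk p.1 x)))].
pose sec s := [set x | blk (g s) x \/ (~ G s /\ blk s x)].
have Qsec : forall p x, Q p x -> sec p.1 x.
  move=> [s j] x /= [Px|[_ [[bx _]|[nG bx]]]]; [left|left|right] => //.
  by exists (e s j) => //; case: (he s) => /(_ j)[].
have secdis : forall s s' x, sec s x -> sec s' x -> s = s'.
  move=> s s' x [b1|[n1 b1]] [b2|[n2 b2]].
  + by apply: gi; apply: blk_dis b1 b2.
  + by exfalso; apply: n2; rewrite -(blk_dis b1 b2); apply: gG.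
  + by exfalso; apply: n1; rewrite (blk_dis b1 b2); apply: gG.
  + by apply: blk_dis b1 b2.
have eb : forall s j, b (e s j) = g s by move=> s j; case: (he s) => /(_ j)[].
have ei : forall s j, infinite_set (P (e s j)) by move=> s j; case: (he s) => /(_ j)[].
have Qdis : forall p p' x, Q p x -> Q p' x -> p = p'.
  move=> p p' x Qp Qp'; have ss := secdis _ _ _ (Qsec _ _ Qp) (Qsec _ _ Qp').
  case: p p' ss Qp Qp' => s j [s' j'] /= ss; subst s'.
  move=> [Pj|[j0 Jx]] [Pj'|[j0' Jx']].
  + by rewrite (proj1 (proj2 (he s)) j j' (dis Pj Pj')).
  + exfalso; case: Jx' => /= [[_ hf]|[nG [k bk Pk]]]; first by apply: (ei s j); apply: hf.
    move: bk => /= bk; have e1 : b k = g s by rewrite (dis Pk Pj) eb.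
    by apply: nG; rewrite -bk e1; apply: gG.
  + exfalso; case: Jx => /= [[_ hf]|[nG [k bk Pk]]]; first by apply: (ei s j'); apply: hf.
    move: bk => /= bk; have e1 : b k = g s by rewrite (dis Pk Pj') eb.
    by apply: nG; rewrite -bk e1; apply: gG.
  + by move: j0 j0' => /= -> ->.
have [f' [fb' fQ]] : exists f : X -> (nat * nat) * nat, bijective f /\ (forall x, Q (f x).1 x).
  apply: combine_cols => //.
  - move=> [s j]; apply: sub_infinite_set (ei s j) => x Px; by left.
  - move=> x; have [k Pk] := cov x; have [Gk|nGk] := pselect (G (b k)).
      have [s gs] := gsurj _ Gk; have [ik|fk] := pselect (infinite_set (P k)).
        have [n en] := (he s).2.2 k (conj (esym gs) ik).
        by exists (s, n); left; rewrite /= en.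
      exists (s, 0%N); right; split => //; left; split.
        by exists k.
      by move=> k' Pk'; rewrite (dis Pk' Pk); apply: contrapT.
    exists (b k, 0%N); right; split => //; right; split => //; by exists k.
pose f x := ((f' x).1.1, ((f' x).1.2, (f' x).2)).
have fb : bijective f.
  case: fb' => h hK Kh; exists (fun q => h ((q.1, q.2.1), q.2.2)).
    by move=> x; rewrite /f /= -!surjective_pairing hK.
  by move=> [a [c d]]; rewrite /f /= Kh.
have colE : forall i j, [set x | (f x).1 = i /\ (f x).2.1 = j] = Q (i, j).
  move=> i j; apply/seteqP; split => x /=.
    by move=> [<- <-]; rewrite -surjective_pairing; apply: fQ.
  by move=> Qx; have := Qdis _ _ _ (fQ x) Qx; case: (f' x).1 => ? ? [-> ->].
have secE : forall i, [set x | (f x).1 = i] = sec i.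
  move=> i; apply/seteqP; split => x /=.
    by move=> <-; apply: (Qsec _ _ (fQ x)).
  by move=> sx; apply: secdis (Qsec _ _ (fQ x)) sx.
apply: (BI_from_cols hI fb).
- move=> i j; rewrite colE.
  have hbi : I [set x | ~ G i /\ blk i x].
    have [Gi|nGi] := pselect (G i); first by apply: (idS hI (id0 hI)) => x [].
    by apply: (idS hI (bad_blk nGi)) => x [].
  apply: (idS hI (idU hI (hP (e i j)) (idU hI (hJb (g i)) hbi))).
  by move=> x [Px|[_ [Jx|bx]]]; [left|right; left|right; right].
- move=> i B; rewrite secE => Bs hBc.
  have hB1 : I (B `&` blk (g i)).
    apply: (hsec (i := g i)); first by move=> x [].
    move=> k; have [ik|fk] := pselect (infinite_set (P k)); last first.
      by apply: sub_finite_set (contrapT fk) => x [].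
    have [bk|bk] := eqVneq (b k) (g i).
      have [n en] := (he i).2.2 k (conj bk ik).
      apply: sub_finite_set (hBc n) => x [[Bx _] Pk]; split => //.
      suff : [set x | (f x).1 = i /\ (f x).2.1 = n] x by case.
      by rewrite colE; left; rewrite /= en.
    by apply: sub_finite_set (finite_set0 X) => x [[_ [k' bk' Pk']] Pk]; move/eqP: bk; apply; rewrite (dis Pk Pk').
  apply: (idS hI (idU hI hB1 (idF hI (hBc 0%N)))) => x Bx.
  case: (Bs x Bx) => [bx|[nG bx]]; first by left.
  right; split => //; suff : [set x | (f x).1 = i /\ (f x).2.1 = 0%N] x by case.
  by rewrite colE; right; split => //; right.
- move=> B hBs; apply: htail => i; have [Gi|nGi] := pselect (G i).
    have [s gs] := gsurj _ Gi; apply: sub_finite_set (hBs s) => x [Bx bx].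
    by split => //; rewrite secE; left; rewrite gs.
  apply: sub_finite_set (hBs i) => x [Bx bx].
  by split => //; rewrite secE; right.
Qed.

End LemmaM.


Lemma ev_nat (T : topologicalType) (s : nat -> T) (y : T) :
  s @ \oo --> y <-> forall U, nbhs y U -> exists M, forall n, (M <= n)%N -> U (s n).
Proof.
split=> [h U hU|h U hU]; first by have [M _ hM] := h U hU; exists M.
by have [M hM] := h U hU; exists M.
Qed.

Lemma seq_conv_all (T : topologicalType) (s : nat -> T) (y : T) :
  s @ \oo --> y <-> conv_along s [set: nat] y.
Proof.
rewrite ev_nat; split=> h U hU.
  have [M hM] := h U hU; apply: (@bound_fin _ M) => n [_ nU].
  by rewrite ltnNge; apply/negP => /hM.
have /fin_nat_bound[M hM] := h U hU; exists M => n Mn.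
by apply: contrapT => nU; move: (hM n (conj I nU)); rewrite ltnNge Mn.
Qed.

Definition seqc (T : topologicalType) := forall s : nat -> T,
  exists N : set nat, infinite_set N /\ exists y, conv_along s N y.

Lemma inc_sub (N : set nat) : infinite_set N ->
  exists phi : nat -> nat, (forall k, N (phi k)) /\ (forall k, (phi k < phi k.+1)%N).
Proof.
move=> iN; have /choice[nx hnx] : forall m, exists n, N n /\ (m < n)%N.
  move=> m; apply: contrapT => hn; apply: iN; apply: (@bound_fin _ m.+1) => n Nn.
  by rewrite ltnS leqNgt; apply/negP => mn; apply: hn; exists n.
exists (fun k => iter k.+1 nx 0%N); split; first by move=> k; case: (hnx (iter k nx 0%N)).
by move=> k; case: (hnx (iter k.+1 nx 0%N)).
Qed.

Lemma inc_inj (phi : nat -> nat) : {homo phi : m n / (m < n)%N} -> injective phi.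
Proof.
move=> h m n e; case: (ltngtP m n) => // mn; move: (h _ _ mn); by rewrite e ltnn.
Qed.

Lemma range_inf (U : Type) (phi : nat -> U) : injective phi -> infinite_set (range phi).
Proof.
move=> pi fr; apply: infinite_nat.
have pi' : {in [set: nat] &, injective phi} by move=> a b _ _; apply: pi.
by rewrite -(eq_finite_set (inj_card_eq pi')).
Qed.

Lemma seqc_iff (T : topologicalType) : seq_compact T <-> seqc T.
Proof.
split=> h s.
  have [phi [hphi [y hy]]] := h s; exists (range phi); split.
    exact/range_inf/inc_inj.
  exists y => U hU; move/seq_conv_all: hy => /(_ U hU) fk.
  apply: sub_finite_set (finite_image phi fk) => _ [[k _ <-] nU].
  by exists k.
have [N [iN [y hy]]] := h s; have [phi [Nphi ph]] := inc_sub iN.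
have hphi : {homo phi : m n / (m < n)%N}.
  by apply: homo_ltn => //; apply: ltn_trans.
exists phi; split => //; exists y; apply/seq_conv_all => U hU.
have pi' : {in phi @^-1` [set m | N m /\ ~ U (s m)] &, injective phi}.
  by move=> a b _ _; apply: inc_inj.
apply: sub_finite_set (finite_preimage pi' (hy U hU)) => k [_ nU].
by split.
Qed.

Lemma sep_pts (T : topologicalType) (hT : hausdorff_space T) (f g : T) : f <> g ->
  exists A B, [/\ nbhs f A, nbhs g B & A `&` B = set0].
Proof.
move=> fg; apply: contrapT => hn; apply: fg; apply: hT => A B hA hB.
apply/set0P/negP => /eqP e; apply: hn; by exists A, B.
Qed.

Lemma fib_img (X : Type) (T : Type) (x : X -> T) (B E : set X) :
  (forall t, finite_set (B `&` x @^-1` [set t])) -> E `<=` B -> infinite_set E ->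
  infinite_set (x @` E).
Proof.
move=> hB EB iE fW; apply: iE.
apply: sub_finite_set (bigcup_finite fW (fun t _ => hB t)) => n En.
by exists (x n); [exists n|split => //; apply: EB].
Qed.

Lemma fil_bigcap (U K : Type) (Fl : set_system U) (D : set K) (f : K -> set U) :
  Filter Fl -> finite_set D -> (forall i, D i -> Fl (f i)) ->
  Fl (\bigcap_(i in D) f i).
Proof.
move=> FF; elim/Peq: K D f => K D f /finite_seqP[s ->].
elim: s => [|a s IH] h.
  by apply: filterS filterT => u _ i.
have h1 : Fl (f a) by apply: h; rewrite /= inE eqxx.
have h2 : Fl (\bigcap_(i in [set` s]) f i).
  by apply: IH => i si; apply: h; rewrite /= inE si orbT.
apply: filterS (filterI h1 h2) => u [fa hs] i /=; rewrite inE => /orP[/eqP ->|si] //.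
exact: hs.
Qed.

Section Boring.
Context (T : topologicalType) (hT : hausdorff_space T).

Lemma boring_setconv (F : set T) : seq_compact T ->
  (forall s : nat -> T, infinite_set (range s) ->
      (exists y : T, s @ \oo --> y) -> exists y, F y /\ s @ \oo --> y) ->
  forall W : set T, infinite_set W -> exists W', [/\ W' `<=` W, infinite_set W' &
    exists2 z, F z & forall U, nbhs z U -> finite_set (W' `\` U)].
Proof.
move=> sc hF W iW; have [w [wW wi]] := inf_seq iW.
have [phi [hphi [y hy]]] := sc w.
have si : injective (w \o phi) by move=> m n /wi /(inc_inj hphi).
have ir : infinite_set (range (w \o phi)).
  exact: range_inf.
have [z [Fz hz]] := hF _ ir (ex_intro _ y hy).
exists (range (w \o phi)); split => //; first by move=> _ [k _ <-]; apply: wW.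
exists z => // U hU; move/seq_conv_all: hz => /(_ U hU) fk.
apply: sub_finite_set (finite_image (w \o phi) fk) => _ [[k _ <-] nU].
by exists k.
Qed.

End Boring.

Section Main.
Context (X : Type) (I : set (set X)) (hI : is_ideal I)
  (hXc : countable [set: X]) (hXi : infinite_set [set: X]).

Lemma finbw_seqc (T : topologicalType) : FinBW I T -> seqc T.
Proof.
move=> [_ hF] s; have [e [_ [ei es]]] := enum_cinf hXc hXi.
have /choice[einv he] : forall x : X, exists n, e n = x by move=> x; apply: es.
have [A [nA [y hy]]] := hF (s \o einv).
have ee : forall m, einv (e m) = m by move=> m; apply: ei; rewrite he.
exists (e @^-1` A); split.
  move=> fN; apply: nA; apply: idF => //.
  apply: sub_finite_set (finite_image e fN) => a Aa; exists (einv a); by rewrite /= he.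
exists y => U hU.
have ei' : {in e @^-1` [set n | A n /\ ~ U ((s \o einv) n)] &, injective e}.
  by move=> a b _ _; apply: ei.
apply: sub_finite_set (finite_preimage ei' (hy U hU)) => m [Am nU].
by rewrite /= ee.
Qed.

Lemma nottall_finbw (T : topologicalType) : ~ tall I -> hausdorff_space T -> seqc T ->
  FinBW I T.
Proof.
move=> nt hT sc; split => // x.
have [A [iA hA]] : exists A, infinite_set A /\ forall B, B `<=` A -> infinite_set B -> ~ I B.
  apply: contrapT => hn; apply: nt => A iA; apply: contrapT => hB; apply: hn.
  exists A; split => // B BA iB IB; apply: hB; by exists B.
have cA : countable A := sub_countable (subset_card_le (subsetT A)) hXc.
have [e [eA [ei es]]] := enum_cinf cA iA.
have [N [iN [y hy]]] := sc (x \o e).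
have iB : infinite_set (e @` N).
  move=> fB; apply: iN.
  have ei' : {in e @^-1` (e @` N) &, injective e} by move=> a b _ _; apply: ei.
  apply: sub_finite_set (finite_preimage ei' fB) => n Nn; by exists n.
exists (e @` N); split.
  by apply: hA iB => _ [n _ <-]; apply: eA.
exists y => U hU; apply: sub_finite_set (finite_image e (hy U hU)).
by move=> _ [[n Nn <-] nU]; exists n.
Qed.

Lemma finite_finbw (T : topologicalType) : hausdorff_space T ->
  finite_set [set: T] -> FinBW I T.
Proof.
move=> hT fT; split => // x.
have [[t nt]|hall] := pselect (exists t, ~ I (x @^-1` [set t])).
  by exists (x @^-1` [set t]); split => //; exists t; apply: conv_const.
exfalso; apply: (idT hI).
have hb : I (\bigcup_(t in [set: T]) x @^-1` [set t]).
  apply: id_bigcup => // t _; apply: contrapT => nt; apply: hall; by exists t.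
by apply: (idS hI hb) => a _; exists (x a).
Qed.

Lemma fin2_not_finbw (T : topologicalType) : ideal_le Fin2 I -> hausdorff_space T ->
  infinite_set [set: T] -> ~ FinBW I T.
Proof.
move=> [f [fb hf]] hT iT [_ hF].
have [d [_ di]] := inf_seq iT.
have [A [nA [y hy]]] := hF (fun a => d (f a).1).
have fi : injective f by apply: bij_inj.
have col : forall n, infinite_set [set m | (f @` A) (n, m)] -> d n = y.
  move=> n icol; pose A1 := [set a | A a /\ (f a).1 = n].
  apply: (conv_const_inf hT (A' := A1) _ _ _ hy).
  - by move=> a [].
  - move=> fA1; apply: icol; apply: sub_finite_set (finite_image (snd \o f) fA1).
    move=> m [a Aa fa]; exists a; first by split => //; rewrite fa.
    by rewrite /= fa.
  - by move=> a [_ <-].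
have h2 : Fin2 (f @` A).
  have [[n0 hn0]|hnone] := pselect (exists n, infinite_set [set m | (f @` A) (n, m)]).
    apply: sub_finite_set (finite_set1 n0) => n hn; apply: di.
    by rewrite (col _ hn) (col _ hn0).
  by apply: sub_finite_set (finite_set0 nat) => n hn; apply: hnone; exists n.
by apply: nA; apply: (idS hI (hf _ h2)) => a Aa; exists a.
Qed.

Lemma boring_finbw (T : topologicalType) : ~ ideal_le Fin2 I -> hausdorff_space T ->
  boring_space T -> FinBW I T.
Proof.
move=> nF hT [sc [F [fF hF]]]; split => // x.
apply: contrapT => hn.
have H : forall A, (exists y, conv_along x A y) -> I A.
  move=> A hA; apply: contrapT => nA; apply: hn; by exists A.
apply: nF; apply: (lemmaL hI hXc (P := fun t => x @^-1` [set t])).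
- by move=> a; exists (x a).
- by move=> t t' a /= <- <-.
- by move=> t; apply: H; exists t; apply: conv_const.
move=> B hB.
have SB := boring_setconv sc hF.
have /choice[AB hAB] : forall fg : T * T, exists AB : set T * set T,
    [/\ nbhs fg.1 AB.1, nbhs fg.2 AB.2 & fg.1 <> fg.2 -> AB.1 `&` AB.2 = set0].
  move=> [f g]; have [e|ne] := pselect (f = g).
    by exists (setT, setT); split => //=; apply: filterT.
  have [A0 [B0 [hA0 hB0 e0]]] := sep_pts hT ne.
  by exists (A0, B0).
pose Uf f := \bigcap_(g in F) (AB (f, g)).1.
have hU : forall f, nbhs f (Uf f).
  move=> f; apply: fil_bigcap => // g _; by case: (hAB (f, g)).
have sepU : forall f g, F g -> f <> g -> Uf f `&` (AB (f, g)).2 = set0.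
  move=> f g Fg fg; case: (hAB (f, g)) => /= _ h2 /(_ fg) h3.
  apply/seteqP; split => // t [Ut Bt]; rewrite -h3; split => //; exact: Ut.
have hBf : forall f, F f -> I (B `&` x @^-1` Uf f).
  move=> f Ff; apply: H; exists f; apply: contrapT => nc.
  have [V [hV iE]] : exists V, nbhs f V /\ infinite_set [set n | (B `&` x @^-1` Uf f) n /\ ~ V (x n)].
    apply: contrapT => hn2; apply: nc => V hV; apply: contrapT => iE; apply: hn2; by exists V.
  have iW := fib_img hB (fun n (h : [set n | (B `&` x @^-1` Uf f) n /\ ~ V (x n)] n) => h.1.1) iE.
  have [W' [W'W iW' [z Fz hz]]] := SB _ iW.
  have [zf|zf] := pselect (z = f).
    subst z; apply: iW'; apply: sub_finite_set (hz V hV) => t W't; split => //.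
    by have [n [_ nV] <-] := W'W t W't.
  have hz' : finite_set (W' `\` (AB (f, z)).2) by apply: hz; case: (hAB (f, z)).
  apply: iW'; apply: sub_finite_set hz' => t W't; split => // Bt.
  have [n [[_ Un] _] tn] := W'W t W't.
  have : (Uf f `&` (AB (f, z)).2) t by split => //; rewrite -tn.
  by rewrite sepU //; apply: nesym.
pose BK := [set n | B n /\ forall f, F f -> ~ Uf f (x n)].
have hBK : finite_set BK.
  apply: contrapT => iBK.
  have iW := fib_img hB (fun n (h : BK n) => h.1) iBK.
  have [W' [W'W iW' [z Fz hz]]] := SB _ iW.
  apply: iW'; apply: sub_finite_set (hz _ (hU z)) => t W't; split => // Ut.
  have [n [_ hn3] tn] := W'W t W't.
  by apply: (hn3 z Fz); rewrite tn.
apply: (idS hI (idU hI (id_bigcup hI fF hBf) (idF hI hBK))) => n Bn.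
have [[f [Ff Uf']]|hno] := pselect (exists f, F f /\ Uf f (x n)).
  by left; exists f.
by right; split => // f Ff Ufn; apply: hno; exists f.
Qed.

End Main.

Lemma subsing_fin (U : Type) (S : set U) : (forall a b, S a -> S b -> a = b) -> finite_set S.
Proof.
move=> h; have [[a Sa]|n0] := pselect (exists a, S a).
  by apply: sub_finite_set (finite_set1 a) => b Sb; apply: h.
by apply: sub_finite_set (finite_set0 U) => b Sb; apply: n0; exists b.
Qed.

Section NonBoring.
Context (T : topologicalType) (hT : hausdorff_space T).

Lemma setconv_inter (V V' : set T) a b : a <> b ->
  conv_along id V a -> conv_along id V' b -> finite_set (V `&` V').
Proof.
move=> ab ha hb; have [A [B [hA hB e]]] := sep_pts hT ab.
have := finite_setU [set n | V n /\ ~ A (id n)] [set n | V' n /\ ~ B (id n)].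
move=> fe; have : finite_set ([set n | V n /\ ~ A (id n)] `|` [set n | V' n /\ ~ B (id n)]).
  by rewrite fe; split; [apply: ha|apply: hb].
apply: sub_finite_set => t [Vt V't].
have [At|nAt] := pselect (A t); last by left.
have [Bt|nBt] := pselect (B t); last by right.
by have : (A `&` B) t by []; rewrite e.
Qed.

Hypothesis nb : forall F : set T, finite_set F -> exists p : T * set T,
  [/\ ~ F p.1, infinite_set p.2 & conv_along id p.2 p.1].

Lemma nonboring_seq : exists z : nat * (nat * nat) -> T,
  forall B, (exists t, conv_along z B t) -> BI B.
Proof.
have /choice[Phi hPhi] : forall F : set T, exists p : T * set T, finite_set F ->
    [/\ ~ F p.1, infinite_set p.2 & conv_along id p.2 p.1].
  move=> F; have [fF|nF] := pselect (finite_set F).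
    by have [p hp] := nb fF; exists p.
  by have [t _] := infinite_setN0 nF; exists (t, set0).
pose ys : nat -> seq T := fix ys n := if n is m.+1 then (Phi [set` ys m]).1 :: ys m else [::].
pose y n := (Phi [set` ys n]).1; pose V n := (Phi [set` ys n]).2.
have hP : forall n, [/\ ~ [set` ys n] (y n), infinite_set (V n) & conv_along id (V n) (y n)].
  by move=> n; apply: hPhi; apply: finite_seq.
have ysm : forall j n, (j < n)%N -> y j \in ys n.
  move=> j; elim=> // n IH; rewrite ltnS leq_eqVlt => /orP[/eqP ->|jn].
    by rewrite /= inE eqxx.
  by rewrite /= inE (IH jn) orbT.
have yi : forall j n, (j < n)%N -> y j <> y n.
  by move=> j n jn e; case: (hP n) => + _ _; apply; rewrite /= -e ysm.
pose D n := [set t | V n t /\ ~ [set` ys n] t /\ (forall j, (j < n)%N -> ~ V j t)].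
have iD : forall n, infinite_set (D n).
  move=> n; case: (hP n) => _ iV cV.
  have fE : finite_set ([set` ys n] `|` \bigcup_(j in `I_n) (V n `&` V j)).
    rewrite finite_setU; split; first exact: finite_seq.
    apply: bigcup_finite; first exact: finite_II.
    move=> j jn; apply: (setconv_inter (nesym (yi j n jn))) => //.
    by case: (hP j).
  apply: sub_infinite_set (infinite_setD iV fE) => t [Vt nE]; split => //; split.
    by move=> Yt; apply: nE; left.
  by move=> j jn Vjt; apply: nE; right; exists j.
have cD : forall n, conv_along id (D n) (y n).
  by move=> n; case: (hP n) => _ _ cV; apply: conv_sub cV => t [].
have /choice[d hd] : forall n, exists e : nat -> T, (forall m, D n (e m)) /\ injective e.
  by move=> n; apply: inf_seq.
exists (fun p => d p.1 p.2.1) => B [t ht].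
pose z := fun p : nat * (nat * nat) => d p.1 p.2.1.
have hcol : forall i j, infinite_set [set m | B (i, (j, m))] -> d i j = t.
  move=> i j icol.
  apply: (conv_const_inf hT (A' := [set p | p.1 = i /\ p.2.1 = j /\ B p]) _ _ _ ht).
  - by move=> p [_ []].
  - move=> fA; apply: icol.
    have inj3 : {in (fun m => (i, (j, m))) @^-1` [set p | p.1 = i /\ p.2.1 = j /\ B p] &,
       injective (fun m => (i, (j, m)))} by move=> a b _ _ [].
    by apply: sub_finite_set (finite_preimage inj3 fA) => m Bm.
  - by move=> p [<- [<- _]].
have h1 : forall i, Fin2 [set jl | B (i, jl)].
  move=> i; apply: subsing_fin => a b ha hb; apply: (proj2 (hd i)).
  by rewrite (hcol _ _ ha) (hcol _ _ hb).
have h2 : forall i, infinite_set [set jl | B (i, jl)] -> D i t \/ t = y i.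
  move=> i iBi; have [[j ij]|nj] := pselect (exists j, infinite_set [set m | B (i, (j, m))]).
    by left; rewrite -(hcol _ _ ij); case: (hd i).
  right; pose Jh := [set j | exists l, B (i, (j, l))].
  have iJ : infinite_set Jh.
    move=> fJ; apply: iBi.
    apply: sub_finite_set (bigcup_finite fJ (F := fun j => pair j @` [set m | B (i, (j, m))]) _).
      by move=> [j l] Bjl; exists j; [exists l|exists l].
    move=> j _; apply: finite_image; apply: contrapT => ij; apply: nj; by exists j.
  have di := proj2 (hd i).
  have iW : infinite_set (d i @` Jh).
    move=> fW; apply: iJ.
    have di' : {in d i @^-1` (d i @` Jh) &, injective (d i)} by move=> a b _ _; apply: di.
    by apply: sub_finite_set (finite_preimage di' fW) => j Jj; exists j.
  have WD : d i @` Jh `<=` D i by move=> _ [j _ <-]; case: (hd i).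
  apply: (conv_uniq hT (x := id) iW).
    move=> U hU; apply: sub_finite_set (finite_image z (ht U hU)).
    by move=> _ [[j [l Bl] <-] nU]; exists (i, (j, l)).
  exact: conv_sub (cD i).
have h3 : finite_set [set i | infinite_set [set jl | B (i, jl)]].
  have fD : finite_set [set i | D i t].
    apply: subsing_fin => a b [Va [_ ha]] [Vb [_ hb]].
    by case: (ltngtP a b) => // ab; [case: (hb a ab)|case: (ha b ab)].
  have fY : finite_set [set i | t = y i].
    apply: subsing_fin => a b ha hb; rewrite ha in hb.
    by case: (ltngtP a b) => // ab; [case: (yi a b ab)|case: (yi b a ab)].
  have : finite_set ([set i | D i t] `|` [set i | t = y i]) by rewrite finite_setU.
  by apply: sub_finite_set => i /h2.
have [k hk] := fin_nat_bound h3.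
exists k; split => // i ki; apply: contrapT => ii.
by move: (hk i ii); rewrite ltnNge ki.
Qed.

End NonBoring.

Section Main2.
Context (X : Type) (I : set (set X)) (hI : is_ideal I)
  (hXc : countable [set: X]) (hXi : infinite_set [set: X]).

Lemma finbw_boring (T : topologicalType) : boring_ideal I -> FinBW I T -> boring_space T.
Proof.
move=> [f [fb hf]] hFB; have sc := (seqc_iff T).2 (finbw_seqc hI hXc hXi hFB).
case: hFB => hT hF; split => //; apply: contrapT => nbF.
have nb : forall F : set T, finite_set F -> exists p : T * set T,
    [/\ ~ F p.1, infinite_set p.2 & conv_along id p.2 p.1].
  move=> F fF.
  have hs : exists s : nat -> T, [/\ infinite_set (range s),
      (exists y : T, s @ \oo --> y) & ~ exists y : T, F y /\ s @ \oo --> y].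
    apply: contrapT => hn; apply: nbF; exists F; split => // s irs ey.
    apply: contrapT => hn2; apply: hn; exists s; by split.
  case: hs => s [irs [y hy] hno].
  exists (y, range s); split => //=.
    by move=> Fy; apply: hno; exists y.
  move=> U hU; move/seq_conv_all: hy => /(_ U hU) fk.
  apply: sub_finite_set (finite_image s fk) => _ [[k _ <-] nU].
  by exists k.
have [z hz] := nonboring_seq hT nb.
have [A [nA [t ht]]] := hF (z \o f).
have hc : exists t, conv_along z (f @` A) t.
  exists t => U hU; apply: sub_finite_set (finite_image f (ht U hU)).
  by move=> _ [[a Aa <-] nU]; exists a.
by apply: nA; apply: (idS hI (hf _ (hz (f @` A) hc))) => a Aa; exists a.
Qed.

End Main2.


Lemma open_sep_haus (T : topologicalType) :
  (forall p q : T, p <> q -> exists A B, [/\ open A, open B, A p, B q & A `&` B = set0]) ->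
  hausdorff_space T.
Proof.
move=> h p q cl; apply: contrapT => pq; have [A [B [oA oB Ap Bq e]]] := h _ _ pq.
have [t [At Bt]] := cl A B (open_nbhs_nbhs (conj oA Ap)) (open_nbhs_nbhs (conj oB Bq)).
by have : (A `&` B) t by []; rewrite e.
Qed.

(* omega + 1 *)
Definition onat := option nat.
HB.instance Definition _ := Choice.copy onat (option nat).

Definition op1 (U : set onat) := U None -> exists m, forall n, (m <= n)%N -> U (Some n).

Lemma op1T : op1 setT. Proof. by move=> _; exists 0%N. Qed.
Lemma op1I : setI_closed op1.
Proof.
move=> A B hA hB [/hA[m hm] /hB[m' hm']]; exists (maxn m m') => n.
by rewrite geq_max => /andP[a b]; split; [apply: hm|apply: hm'].
Qed.
Lemma op1U (J : Type) (f : J -> set onat) : (forall i, op1 (f i)) -> op1 (\bigcup_i f i).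
Proof.
move=> h [i _ fi]; have [m hm] := h i fi; exists m => n mn; exists i => //; exact: hm.
Qed.

HB.instance Definition _ := isOpenTopological.Build onat op1T op1I op1U.

Lemma onat_open (U : set onat) : open U = op1 U.
Proof. by []. Qed.

Lemma nbhs_op (T : topologicalType) (p : T) U : nbhs p U ->
  exists V, [/\ open V, V p & V `<=` U].
Proof. by rewrite nbhsE => -[V [oV Vp] VU]; exists V. Qed.

Lemma onat_haus : hausdorff_space onat.
Proof.
have sing : forall n, open [set (Some n : onat)] by move=> n; rewrite onat_open.
have csing : forall n, open (~` [set (Some n : onat)]).
  move=> n; rewrite onat_open => _; exists n.+1 => k nk [e].
  by move: nk; rewrite e ltnn.
apply: open_sep_haus => p q pq.
suff h : forall p q : onat, p <> q -> p <> None ->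
    exists A B, [/\ open A, open B, A p, B q & A `&` B = set0].
  case: p pq => [n|] pq; first by apply: h.
  case: q pq => [m|] pq; last by case: pq.
  have [A [B [oA oB Ap Bq e]]] := h (Some m) None (nesym pq) ltac:(by []).
  by exists B, A; split => //; rewrite setIC.
move=> p0 q' pq' pN; case: p0 pq' pN => [n|] pq' pN; last by case: pN.
exists [set Some n], (~` [set Some n]); split => //.
  by move=> e; apply: pq'; rewrite e.
by apply/seteqP; split => [t [a b]|t //]; exact: b a.
Qed.

Lemma onat_inf : infinite_set [set: onat].
Proof.
move=> f; apply: (range_inf (U := onat) (phi := Some)); first by move=> a b [].
by apply: sub_finite_set f.
Qed.

Lemma onat_seqc : seqc onat.
Proof.
move=> s; have [[v iv]|hv] := pselect (exists v, infinite_set (s @^-1` [set v])).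
  by exists (s @^-1` [set v]); split => //; exists v; apply: conv_const.
exists setT; split; first exact: infinite_nat.
exists None => U /nbhs_op[V [oV VN VU]]; move: (oV VN) => [m hm].
have fin : finite_set (\bigcup_(k in `I_m) s @^-1` [set Some k]).
  apply: bigcup_finite; first exact: finite_II.
  by move=> k _; apply: contrapT => ik; apply: hv; exists (Some k).
apply: sub_finite_set fin => n [_ nU]; case E: (s n) nU => [k|] nU.
  exists k; last by rewrite /= E.
  by rewrite /= ltnNge; apply/negP => mk; apply: nU; apply: VU; rewrite -E; rewrite E; apply: hm.
by exfalso; apply: nU; apply: VU.
Qed.

Lemma onat_boring : boring_space onat.
Proof.
split; first exact/seqc_iff/onat_seqc.
exists [set None]; split; first exact: finite_set1.
move=> s irs [y hy]; exists y; split => //.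
case: y hy => [k|] hy //; exfalso; apply: irs.
have ok : open [set (Some k : onat)] by rewrite onat_open.
have /ev_nat /(_ _ (open_nbhs_nbhs (conj ok erefl)))[M hM] := hy.
have : finite_set (s @` `I_M `|` [set Some k]).
  by rewrite finite_setU; split; [apply: finite_image; apply: finite_II|apply: finite_set1].
apply: sub_finite_set => _ [n _ <-]; have [nM|Mn] := ltnP n M.
  by left; exists n.
by right; apply: hM.
Qed.

(* omega^2 + 1 *)
Definition o2 := option (nat * option nat).
HB.instance Definition _ := Choice.copy o2 (option (nat * option nat)).

Definition op2 (U : set o2) :=
  (forall i, U (Some (i, None)) -> exists m, forall j, (m <= j)%N -> U (Some (i, Some j))) /\
  (U None -> exists m, forall i o, (m <= i)%N -> U (Some (i, o))).

Lemma op2T : op2 setT. Proof. by split => [i _|_]; exists 0%N. Qed.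
Lemma op2I : setI_closed op2.
Proof.
move=> A B [hA1 hA2] [hB1 hB2]; split.
  move=> i [/hA1[m hm] /hB1[m' hm']]; exists (maxn m m') => n.
  by rewrite geq_max => /andP[a b]; split; [apply: hm|apply: hm'].
move=> [/hA2[m hm] /hB2[m' hm']]; exists (maxn m m') => n o.
by rewrite geq_max => /andP[a b]; split; [apply: hm|apply: hm'].
Qed.
Lemma op2U (J : Type) (f : J -> set o2) : (forall i, op2 (f i)) -> op2 (\bigcup_i f i).
Proof.
move=> h; split.
  move=> i [k _ fi]; have [m hm] := (h k).1 i fi; exists m => n mn; exists k => //; exact: hm.
move=> [k _ fi]; have [m hm] := (h k).2 fi; exists m => n o mn; exists k => //; exact: hm.
Qed.

HB.instance Definition _ := isOpenTopological.Build o2 op2T op2I op2U.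

Lemma o2_open (U : set o2) : open U = op2 U.
Proof. by []. Qed.

Definition bo2 (p : o2) := if p is Some (i, _) then i else 0%N.

Lemma o2_haus : hausdorff_space o2.
Proof.
have iso : forall i j, open [set (Some (i, Some j) : o2)] /\ open (~` [set (Some (i, Some j) : o2)]).
  move=> i j; rewrite !o2_open; split; first by split => [i' []|[]].
  split.
    move=> i' _; exists j.+1 => k jk [e1 e2]; by move: jk; rewrite e2 ltnn.
  by move=> _; exists i.+1 => i' o ii [e1 e2]; move: ii; rewrite e1 ltnn.
have col : forall i, open [set p : o2 | exists o, p = Some (i, o)] /\
    open (~` [set p : o2 | exists o, p = Some (i, o)]).
  move=> i; rewrite !o2_open; split; split.
  - by move=> i' [o [-> _]]; exists 0%N => j _; exists (Some j).
  - by move=> [o].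
  - move=> i' ni; exists 0%N => j _ [o [e1 _]]; apply: ni; exists None; by rewrite e1.
  - by move=> _; exists i.+1 => i' o ii [o' [e1 _]]; move: ii; rewrite e1 ltnn.
have sep_iso : forall i j (q : o2), Some (i, Some j) <> q ->
    exists A B : set o2, [/\ open A, open B, A (Some (i, Some j)), B q & A `&` B = set0].
  move=> i j q ne; exists [set Some (i, Some j)], (~` [set Some (i, Some j)]).
  split => //; try by case: (iso i j).
    by move=> e; apply: ne; rewrite e.
  by apply/seteqP; split => [t [a b]|t //]; exact: b a.
have sep_col : forall i (q : o2), ~ (exists o, q = Some (i, o)) ->
    exists A B : set o2, [/\ open A, open B, A (Some (i, None)), B q & A `&` B = set0].
  move=> i q nq; exists [set p : o2 | exists o, p = Some (i, o)], (~` [set p : o2 | exists o, p = Some (i, o)]).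
  split => //; try by case: (col i).
    by exists None.
  by apply/seteqP; split => [t [a b]|t //]; exact: b a.
have sym : forall p q : o2, (exists A B : set o2, [/\ open A, open B, A p, B q & A `&` B = set0]) ->
    exists A B : set o2, [/\ open A, open B, A q, B p & A `&` B = set0].
  by move=> p q [A [B [oA oB Ap Bq e]]]; exists B, A; split => //; rewrite setIC.
apply: open_sep_haus => p q pq.
case: p pq => [[i [j|]]|] pq.
- exact: sep_iso.
- case: q pq => [[i' [j'|]]|] pq.
  + by apply: sym; apply: sep_iso => e; apply: pq.
  + apply: sep_col => -[o [e _]]; apply: pq; by rewrite e.
  + by apply: sep_col => -[o].
- case: q pq => [[i' [j'|]]|] pq.
  + by apply: sym; apply: sep_iso => e; apply: pq.
  + by apply: sym; apply: sep_col => -[o].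
  + by case: pq.
Qed.

Lemma o2_not_boring : ~ boring_space o2.
Proof.
move=> [_ [F [fF hF]]].
have [M hM] := fin_nat_bound (finite_image bo2 fF).
pose s n : o2 := Some (M, Some n).
have ir : infinite_set (range s) by apply: range_inf => a b [].
have hs : s @ \oo --> (Some (M, None) : o2).
  apply/ev_nat => U /nbhs_op[V [oV VM VU]].
  have [m hm] := oV.1 M VM; exists m => n mn; apply: VU; exact: hm.
have [y [Fy hy]] := hF s ir (ex_intro (fun y : o2 => s @ \oo --> y) _ hs).
have e : y = Some (M, None).
  apply: (conv_uniq o2_haus (A := setT) infinite_nat); apply/seq_conv_all; eassumption.
have := hM (bo2 y) (ex_intro2 _ _ y Fy erefl); by rewrite e ltnn.
Qed.

Section Deriv.
Context (X : Type) (I : set (set X)) (hI : is_ideal I)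
  (hXc : countable [set: X]) (hXi : infinite_set [set: X]).

Lemma not_finbw_fun (T : topologicalType) : hausdorff_space T -> ~ FinBW I T ->
  exists x : X -> T, forall A, (exists y, conv_along x A y) -> I A.
Proof.
move=> hT nF; apply: contrapT => hn; apply: nF; split => // x.
apply: contrapT => hx; apply: hn; exists x => A hA; apply: contrapT => nA.
by apply: hx; exists A.
Qed.

Lemma o2_boring_ideal : ~ ideal_le Fin2 I -> ~ FinBW I o2 -> boring_ideal I.
Proof.
move=> nF2 nF; have [x H] := not_finbw_fun o2_haus nF.
apply: (lemmaM hI hXc (P := fun k => x @^-1` [set k]) (b := bo2)) => //.
- by move=> a; exists (x a).
- by move=> k k' a /= <- <-.
- by move=> k; apply: H; exists k; apply: conv_const.
- move=> i B Bb hB; apply: H; exists (Some (i, None)) => U /nbhs_op[V [oV Vi VU]].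
  have [m hm] := oV.1 i Vi.
  pose D := [set p : o2 | p = None \/ exists2 j, (j < m)%N & p = Some (i, Some j)].
  have fD : finite_set D.
    have : finite_set ([set None] `|` (fun j => Some (i, Some j) : o2) @` `I_m).
      by rewrite finite_setU; split; [apply: finite_set1|apply: finite_image; apply: finite_II].
    by apply: sub_finite_set => p [->|[j jm ->]]; [left|right; exists j].
  apply: sub_finite_set (bigcup_finite fD (fun k _ => hB k)) => n [Bn nU].
  exists (x n); last by split.
  have [k bk xk] := Bb n Bn; move: xk => /= xk; rewrite xk.
  case: k bk xk => [[i' [j|]]|] /= bk xk; [right|exfalso|by left].
    exists j; last by rewrite bk.
    rewrite ltnNge; apply/negP => mj; apply: nU; apply: VU.
    by rewrite xk bk; apply: hm.
  by apply: nU; apply: VU; rewrite xk bk.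
- move=> B hB; apply: H; exists None => U /nbhs_op[V [oV VN VU]].
  have [m hm] := oV.2 VN.
  apply: sub_finite_set (bigcup_finite (finite_II m) (fun i _ => hB i)) => n [Bn nU].
  case E: (x n) => [[i o]|]; last by exfalso; apply: nU; apply: VU; rewrite E.
  exists i.
    rewrite /= ltnNge; apply/negP => mi; apply: nU; apply: VU; rewrite E; exact: hm.
  by split => //; exists (Some (i, o)).
Qed.

End Deriv.


Definition mrw (X : Type) (Ad : set (set X)) : Type := {classic (X + (set X + unit))}.
HB.instance Definition _ (X : Type) (Ad : set (set X)) :=
  Choice.copy (mrw Ad) {classic (X + (set X + unit))}.

Section Mrowka.
Context (X : Type) (Ad : set (set X)).
Local Notation mrw := (mrw Ad).

Definition ptX (x : X) : mrw := inl x.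
Definition ptA (A : set X) : mrw := inr (inl A).
Definition ptI : mrw := inr (inr tt).

Definition opM (U : set mrw) :=
  (forall A, Ad A -> U (ptA A) -> finite_set [set x | A x /\ ~ U (ptX x)]) /\
  (U ptI -> exists F : set (set X), [/\ finite_set F,
     (forall A, ~ U (ptA A) -> F A) &
     finite_set [set x | ~ U (ptX x) /\ ~ exists2 A, F A & Ad A /\ A x]]).

Lemma opMT : opM setT.
Proof.
split=> [A _ _|_]; first by apply: sub_finite_set (finite_set0 X) => x [_ /(_ I)].
exists set0; split.
- exact: finite_set0.
- by move=> A /(_ I).
- by apply: sub_finite_set (finite_set0 X) => x [/(_ I)].
Qed.

Lemma opMI : setI_closed opM.
Proof.
move=> U V [hU1 hU2] [hV1 hV2]; split.
  move=> A AdA [UA VA]; have := finite_setU [set x | A x /\ ~ U (ptX x)] [set x | A x /\ ~ V (ptX x)].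
  move=> e; have : finite_set ([set x | A x /\ ~ U (ptX x)] `|` [set x | A x /\ ~ V (ptX x)]).
    by rewrite e; split; [apply: hU1|apply: hV1].
  apply: sub_finite_set => x [Ax nUV].
  have [Ux|nUx] := pselect (U (ptX x)); last by left.
  by right; split => // Vx; apply: nUV.
move=> [/hU2[F [fF hF ffF]] /hV2[G [fG hG ffG]]]; exists (F `|` G); split.
- by rewrite finite_setU.
- move=> A nUV; have [UA|nUA] := pselect (U (ptA A)); last by left; apply: hF.
  by right; apply: hG => VA; apply: nUV.
- have : finite_set ([set x | ~ U (ptX x) /\ ~ exists2 A, F A & Ad A /\ A x] `|`
     [set x | ~ V (ptX x) /\ ~ exists2 A, G A & Ad A /\ A x]) by rewrite finite_setU.
  apply: sub_finite_set => x [nUV nex].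
  have [Ux|nUx] := pselect (U (ptX x)).
    right; split; first by move=> Vx; apply: nUV.
    by move=> [A GA hA]; apply: nex; exists A => //; right.
  by left; split => // -[A FA hA]; apply: nex; exists A => //; left.
Qed.

Lemma opMU (J : Type) (f : J -> set mrw) : (forall i, opM (f i)) -> opM (\bigcup_i f i).
Proof.
move=> h; split.
  move=> A AdA [i _ fi]; apply: sub_finite_set ((h i).1 A AdA fi) => x [Ax nU].
  by split => // fx; apply: nU; exists i.
move=> [i _ fi]; have [F [fF hF ffF]] := (h i).2 fi; exists F; split => //.
  by move=> A nU; apply: hF => fA; apply: nU; exists i.
apply: sub_finite_set ffF => x [nU nex]; split => // fx; apply: nU; by exists i.
Qed.

HB.instance Definition _ := isOpenTopological.Build mrw opMT opMI opMU.

Lemma mrw_open (U : set mrw) : open U = opM U.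
Proof. by []. Qed.

End Mrowka.

Section MrowkaProps.
Context (X : Type) (Ad : set (set X)).
Hypothesis AD : forall A B, Ad A -> Ad B -> A <> B -> finite_set (A `&` B).
Local Notation M := (mrw Ad).

Lemma ptX_inj : injective (@ptX X Ad). Proof. by move=> a b []. Qed.
Lemma ptA_inj : injective (@ptA X Ad). Proof. by move=> a b []. Qed.

Lemma open_singX x : open [set ptX Ad x].
Proof. by rewrite mrw_open; split => [A _ []|[]]. Qed.

Lemma open_csingX x : open (~` [set ptX Ad x]).
Proof.
rewrite mrw_open; split.
  by move=> A _ _; apply: sub_finite_set (finite_set1 x) => y [_ /contrapT /ptX_inj].
move=> _; exists set0; split; first exact: finite_set0.
  by move=> A /contrapT [].
by apply: sub_finite_set (finite_set1 x) => y [/contrapT /ptX_inj].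
Qed.

Lemma open_singA A : ~ Ad A -> open [set ptA Ad A].
Proof.
move=> nA; rewrite mrw_open; split => [B AdB /ptA_inj eB|e].
  by exfalso; apply: nA; rewrite -eB.
by exfalso; inversion e.
Qed.

Lemma open_csingA A : open (~` [set ptA Ad A]).
Proof.
rewrite mrw_open; split.
  by move=> B _ _; apply: sub_finite_set (finite_set0 X) => y [_ /contrapT].
move=> _; exists [set A]; split; first exact: finite_set1.
  by move=> B /contrapT /ptA_inj.
by apply: sub_finite_set (finite_set0 X) => y [/contrapT].
Qed.

Definition NA (A E : set X) : set M :=
  [set p | p = ptA Ad A \/ exists2 x, A x /\ ~ E x & p = ptX Ad x].

Lemma open_NA A E : finite_set (A `&` E) -> open (NA A E).
Proof.
move=> fAE; rewrite mrw_open; split; last by move=> [|[x _]].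
move=> B AdB [/ptA_inj ->|[x _]] //.
apply: sub_finite_set fAE => y [Ay nN]; split => //; apply: contrapT => nE.
by apply: nN; right; exists y.
Qed.

Lemma NAX A E y : NA A E (ptX Ad y) -> A y /\ ~ E y.
Proof. by move=> [e|[z hz /ptX_inj ->]] //; inversion e. Qed.

Lemma NAA A E B : NA A E (ptA Ad B) -> B = A.
Proof. by move=> [/ptA_inj //|[z _ e]]; inversion e. Qed.

Lemma open_cNA A : Ad A -> open (~` NA A set0).
Proof.
move=> AdA; rewrite mrw_open; split.
  move=> B AdB nN; have BA : B <> A by move=> e; apply: nN; left; rewrite e.
  apply: sub_finite_set (AD AdB AdA BA) => y [By nN'].
  by have [Ay _] := NAX (contrapT nN').
move=> _; exists [set A]; split; first exact: finite_set1.
  by move=> B nN; apply: (NAA (contrapT nN)).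
apply: sub_finite_set (finite_set0 X) => y [nN nex].
have [Ay _] := NAX (contrapT nN).
by apply: nex; exists A.
Qed.

Lemma mrw_haus : hausdorff_space M.
Proof.
have iso : forall p : M, open [set p] -> open (~` [set p]) -> forall q, p <> q ->
    exists A B : set M, [/\ open A, open B, A p, B q & A `&` B = set0].
  move=> p o1 o2 q pq; exists [set p], (~` [set p]); split => //.
    by move=> e; apply: pq; rewrite e.
  by apply/seteqP; split => [t [a b]|t //]; exact: b a.
have sym : forall p q : M, (exists A B : set M, [/\ open A, open B, A p, B q & A `&` B = set0]) ->
    exists A B : set M, [/\ open A, open B, A q, B p & A `&` B = set0].
  by move=> p q [A [B [oA oB Ap Bq e]]]; exists B, A; split => //; rewrite setIC.
have isoX : forall x (q : M), ptX Ad x <> q -> exists A B : set M,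
    [/\ open A, open B, A (ptX Ad x), B q & A `&` B = set0].
  by move=> x q; apply: iso; [apply: open_singX|apply: open_csingX].
have isoA : forall A (q : M), ~ Ad A -> ptA Ad A <> q -> exists A0 B : set M,
    [/\ open A0, open B, A0 (ptA Ad A), B q & A0 `&` B = set0].
  by move=> A q nA; apply: iso; [apply: open_singA|apply: open_csingA].
apply: open_sep_haus => p q pq.
case: p pq => [x|[A|[]]] pq; first exact: isoX.
  have [AdA|nA] := pselect (Ad A); last exact: isoA.
  case: q pq => [y|[B|[]]] pq.
  - by apply: sym; apply: isoX => e; apply: pq.
  - have [AdB|nB] := pselect (Ad B); last by apply: sym; apply: isoA => // e; apply: pq.
    have AB : A <> B by move=> e; apply: pq; rewrite e.
    exists (NA A B), (NA B A); split.
    + by apply: open_NA; apply: AD.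
    + by apply: open_NA; rewrite setIC; apply: AD.
    + by left.
    + by left.
    + apply/seteqP; split => // -[y|[C|[]]] [h1 h2].
      * by have [_ ?] := NAX h1; have [? _] := NAX h2.
      * by apply: AB; rewrite -(NAA h1) -(NAA h2).
      * by case: h1 => [e|[? _ e]]; inversion e.
  - exists (NA A set0), (~` NA A set0); split.
    + by apply: open_NA; rewrite setI0; apply: finite_set0.
    + exact: open_cNA.
    + by left.
    + by move=> [|[z _]].
    + by apply/seteqP; split => [t [a b]|t //]; exact: b a.
case: q pq => [y|[B|[]]] pq.
- by apply: sym; apply: isoX => e; apply: pq.
- have [AdB|nB] := pselect (Ad B); last by apply: sym; apply: isoA => // e; apply: pq.
  exists (~` NA B set0), (NA B set0); split.
  + exact: open_cNA.
  + by apply: open_NA; rewrite setI0; apply: finite_set0.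
  + by move=> [|[z _]].
  + by left.
  + by apply/seteqP; split => [t [a b]|t //]; exact: a b.
- by case: pq.
Qed.

End MrowkaProps.

Section MrowkaSeq.
Context (X : Type) (Ad : set (set X)).
Hypothesis MAD : forall D : set X, infinite_set D -> exists2 A, Ad A & infinite_set (D `&` A).
Local Notation M := (mrw Ad).

Lemma mrw_seqc : seqc M.
Proof.
move=> s; have [[v iv]|hv] := pselect (exists v, infinite_set (s @^-1` [set v])).
  by exists (s @^-1` [set v]); split => //; exists v; apply: conv_const.
have fv : forall v, finite_set (s @^-1` [set v]) by move=> v; apply: contrapT => iv; apply: hv; exists v.
pose Nx := [set n | exists x, s n = ptX Ad x].
pose Na := [set n | exists B, s n = ptA Ad B].
have [iNx|fNx] := pselect (infinite_set Nx).
  pose Dx := [set x | exists n, s n = ptX Ad x].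
  have iDx : infinite_set Dx.
    move=> fD; apply: iNx; apply: sub_finite_set (bigcup_finite fD (fun x _ => fv (ptX Ad x))).
    by move=> n [x e]; exists x => //; exists n.
  have [A AdA iDA] := MAD iDx.
  pose N := [set n | exists2 x, A x & s n = ptX Ad x].
  exists N; split.
    move=> fN; apply: iDA.
    have fS : forall n, finite_set [set x | s n = ptX Ad x].
      move=> n; apply: subsing_fin => a b ea eb; apply: (@ptX_inj X Ad); by rewrite -ea -eb.
    apply: sub_finite_set (bigcup_finite fN (fun n _ => fS n)).
    by move=> x [[n e] Ax]; exists n => //; exists x.
  exists (ptA Ad A) => U /nbhs_op[V [oV VA VU]].
  have fE := oV.1 A AdA VA.
  apply: sub_finite_set (bigcup_finite fE (fun x _ => fv (ptX Ad x))).
  move=> n [[x Ax e] nU]; exists x => //; split => // Vx; apply: nU; apply: VU.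
  by rewrite e.
have [iNa|fNa] := pselect (infinite_set Na).
  exists Na; split => //; exists (ptI Ad) => U /nbhs_op[V [oV VI VU]].
  have [F [fF hF _]] := oV.2 VI.
  apply: sub_finite_set (bigcup_finite fF (fun B _ => fv (ptA Ad B))).
  move=> n [[B e] nU]; exists B => //; apply: hF => VB; apply: nU; apply: VU.
  by rewrite e.
exfalso; have fI := fv (ptI Ad).
apply: infinite_nat.
have : finite_set (Nx `|` Na `|` s @^-1` [set ptI Ad]).
  by rewrite !finite_setU; split; [split; apply: contrapT|].
apply: sub_finite_set => n _.
case E: (s n) => [x|[B|[]]].
- by left; left; exists x.
- by left; right; exists B.
- by right.
Qed.

End MrowkaSeq.

Section MrowkaFin.
Context (X : Type) (I : set (set X)) (hI : is_ideal I) (Ad : set (set X)).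
Hypothesis AdI : Ad `<=` I.
Hypothesis AD : forall A B, Ad A -> Ad B -> A <> B -> finite_set (A `&` B).
Hypothesis MAD : forall D : set X, infinite_set D -> exists2 A, Ad A & infinite_set (D `&` A).

Lemma mrw_not_finbw : ~ FinBW I (mrw Ad).
Proof.
move=> [_ hF]; have [A [nA [y hy]]] := hF (ptX Ad).
have iA : infinite_set A by move=> fA; apply: nA; apply: idF.
case: y hy => [x0|[B|[]]] hy.
- have := hy _ (open_nbhs_nbhs (conj (open_singX Ad x0) erefl)) => fE.
  apply: iA; have : finite_set ([set n | A n /\ ~ [set ptX Ad x0] (ptX Ad n)] `|` [set x0]).
    by rewrite finite_setU; split => //; apply: finite_set1.
  apply: sub_finite_set => n An; have [e|ne] := pselect (n = x0); first by right.
  by left; split => // h; apply: ne; apply: ptX_inj h.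
- have [AdB|nB] := pselect (Ad B).
    have oN : open_nbhs (ptA Ad B) (@NA _ Ad B set0).
      by split; [apply: open_NA; rewrite setI0; apply: finite_set0|left].
    have fE := hy _ (open_nbhs_nbhs oN).
    apply: nA; apply: (idS hI (idU hI (AdI AdB) (idF hI fE))) => n An.
    have [Bn|nBn] := pselect (B n); first by left.
    by right; split => // h; apply: nBn; exact: (NAX h).1.
  have oB : open_nbhs (ptA Ad B) [set ptA Ad B] by split; [apply: open_singA|].
  apply: iA; apply: sub_finite_set (hy _ (open_nbhs_nbhs oB)) => n An; split => //.
- have [B AdB iAB] := MAD iA.
  have oC : open_nbhs (ptI Ad) (~` @NA _ Ad B set0).
    split; first exact: (open_cNA AD AdB).
    by case=> [e|[z _ e]]; inversion e.
  apply: iAB; apply: sub_finite_set (hy _ (open_nbhs_nbhs oC)) => n [An Bn].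
  split => //; apply; right; exists n => //; split => // h.
Qed.

End MrowkaFin.

Lemma mad_exists (X : Type) (I : set (set X)) (hI : is_ideal I) : tall I ->
  exists Ad : set (set X), [/\ Ad `<=` I,
    (forall A B, Ad A -> Ad B -> A <> B -> finite_set (A `&` B)) &
    (forall D : set X, infinite_set D -> exists2 A, Ad A & infinite_set (D `&` A))].
Proof.
move=> ht.
pose P := [set Ad : set (set X) | Ad `<=` I /\
  forall A B, Ad A -> Ad B -> A <> B -> finite_set (A `&` B)].
have [Ad [[AdI AD] hmax]] : exists Ad, P Ad /\ forall B, Ad `<` B -> ~ P B.
  apply: Zorn_bigcup => F FP Ft; split.
    by move=> A [Ad FAd AdA]; apply: (FP _ FAd).1.
  move=> A B [Ad1 F1 A1] [Ad2 F2 B2] AB.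
  have [s12|s21] := Ft _ _ F1 F2.
    by apply: (FP _ F2).2 => //; apply: s12.
  by apply: (FP _ F1).2 => //; apply: s21.
exists Ad; split => // D iD.
have [D' [D'D [iD' ID']]] := ht D iD.
apply: contrapT => hn.
have fD' : forall A, Ad A -> finite_set (D' `&` A).
  move=> A AdA; apply: contrapT => iDA; apply: hn; exists A => //.
  by apply: sub_infinite_set iDA => x [? ?]; split => //; apply: D'D.
have nD' : ~ Ad D' by move=> AdD; apply: iD'; rewrite -(setIid D'); apply: fD'.
apply: (hmax (Ad `|` [set D'])).
  split; first by move=> A AA; left.
  by move=> /(_ D' (or_intror erefl)).
split.
  by move=> A [/AdI //|->].
move=> A B [AA|->] [BB|->] AB.
- exact: AD.
- by rewrite setIC; apply: fD'.
- exact: fD'.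
- by case: AB.
Qed.

Unset Implicit Arguments.
Set Strict Implicit.


Theorem theorem6p5 (X : Type) (hXc : countable [set: X])
    (hXi : infinite_set [set: X]) (I : set (set X)) (hI : is_ideal I) :
  (ideal_le Fin2 I <->
     (forall T : topologicalType,
        FinBW I T <-> (hausdorff_space T /\ finite_set [set: T]))) /\
  ((boring_ideal I /\ ~ ideal_le Fin2 I) <->
     (forall T : topologicalType,
        FinBW I T <-> (hausdorff_space T /\ boring_space T))) /\
  (~ tall I <->
     (forall T : topologicalType,
        FinBW I T <-> (hausdorff_space T /\ seq_compact T))).
Proof.
split; [|split].
- split.
    move=> hF2 T; split.
      move=> h; split; first exact: h.1.
      by apply: contrapT => iT; apply: (fin2_not_finbw hI hF2 h.1 iT h).
    by move=> [hT fT]; apply: finite_finbw.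
  move=> hyp; apply: contrapT => nF2.
  have := boring_finbw hI hXc nF2 onat_haus onat_boring.
  by move/hyp => [_ /onat_inf].
- split.
    move=> [hb nF2] T; split.
      by move=> h; split; [exact: h.1|exact: (finbw_boring hI hXc hXi hb h)].
    by move=> [hT bT]; apply: boring_finbw.
  move=> hyp.
  have nF2 : ~ ideal_le Fin2 I.
    move=> hF2; have := (hyp onat).2 (conj onat_haus onat_boring).
    exact: (fin2_not_finbw hI hF2 onat_haus onat_inf).
  split => //; apply: (o2_boring_ideal hI hXc nF2).
  by move/hyp => [_ /o2_not_boring].
- split.
    move=> nt T; split.
      by move=> h; split; [exact: h.1|exact/seqc_iff/(finbw_seqc hI hXc hXi h)].
    by move=> [hT sc]; apply: (nottall_finbw hXc nt hT); apply/seqc_iff.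
  move=> hyp ht; have [Ad [AdI AD MAD]] := mad_exists hI ht.
  have := (hyp (mrw Ad)).2 (conj (mrw_haus AD) ((seqc_iff _).2 (mrw_seqc MAD))).
  exact: (mrw_not_finbw hI AdI AD MAD).
Qed.
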